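(* Let $\Gamma$ be a Deza graph with parameters $(n,k,k-1,a)$, $k>1$, $\beta=1$. For any $NA$-vertex $x$ and any vertex $y\in N(x,x')$, the vertex $y_b$ also belongs to $N(x,x')$.
   Context: A Deza graph with parameters $(n,k,b,a)$, $a\le b$, is a $k$-regular graph on $n$ vertices in which any two distinct vertices have $a$ or $b$ common neighbours; $\beta$ is the number of vertices $u\ne v$ with exactly $b$ common neighbours with a given vertex $v$. Since $\beta=1$, for each vertex $x$ let $x_b$ denote the unique vertex having $b=k-1$ common neighbours with $x$. A vertex $x$ is an $A$-vertex if $x$ is adjacent to $x_b$, and an $NA$-vertex otherwise. $N(x,y)$ is the set of common neighbours of $x$ and $y$. For an $NA$-vertex $x$, $x'$ denotes the unique neighbour of $x$ not adjacent to $x_b$. *)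

(* Defs.v *)
From mathcomp Require Import all_boot.
Set Implicit Arguments. Unset Strict Implicit. Unset Printing Implicit Defensive.

Definition simple_graph (T : finType) (e : rel T) : Prop :=
  symmetric e /\ irreflexive e.

Definition nbhd (T : finType) (e : rel T) (x : T) : {set T} := [set y | e x y].
Definition cnbhd (T : finType) (e : rel T) (x y : T) : {set T} :=
  nbhd e x :&: nbhd e y.

Definition deza_graph (T : finType) (e : rel T) (n k b a : nat) : Prop :=
  [/\ simple_graph e, #|T| = n, a <= b,
      (forall x, #|nbhd e x| = k) &
      (forall x y, x != y -> #|cnbhd e x y| = a \/ #|cnbhd e x y| = b)].

Definition b_partner (T : finType) (e : rel T) (b : nat) (v u : T) : bool :=
  (u != v) && (#|cnbhd e v u| == b).

Definition beta (T : finType) (e : rel T) (b : nat) (v : T) : nat :=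
  #|[set u | b_partner e b v u]|.

(* Main.v *)
Require Import Defs.
From mathcomp Require Import all_boot.
From mathcomp Require Import zify.
Set Implicit Arguments. Unset Strict Implicit. Unset Printing Implicit Defensive.

Lemma inN (T : finType) (e : rel T) x y : (y \in nbhd e x) = e x y.
Proof. by rewrite /nbhd inE. Qed.

Lemma inC (T : finType) (e : rel T) x y z : (z \in cnbhd e x y) = e x z && e y z.
Proof. by rewrite /cnbhd inE !inN. Qed.

Lemma Klem (T : finType) (e : rel T) k (u v w w' : T) :
  (forall x, #|nbhd e x| = k) -> #|cnbhd e u v| = k - 1 -> 0 < k ->
  e u w -> ~~ e v w -> e u w' -> w' != w -> e v w'.
Proof.
move=> hk hc k0 uw vw uw' ww'.
apply/negPn/negP => vw'.
have sub : [set w; w'] \subset nbhd e u :\: nbhd e v.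
  by apply/subsetP => z; rewrite !inE => /orP[] /eqP ->; rewrite ?uw ?vw ?uw' ?vw'.
have c2 : #|[set w; w']| = 2 by rewrite cards2 eq_sym ww'.
have := subset_leq_card sub.
have := cardsID (nbhd e v) (nbhd e u).
rewrite /cnbhd in hc. rewrite hc hk c2. lia.
Qed.

Lemma bp_sym (T : finType) (e : rel T) b (u v : T) :
  b_partner e b u v -> b_partner e b v u.
Proof. by rewrite /b_partner /cnbhd setIC eq_sym. Qed.

Lemma bp_card (T : finType) (e : rel T) b (u v : T) :
  b_partner e b u v -> #|cnbhd e u v| = b.
Proof. by case/andP => _ /eqP. Qed.

Lemma bp_uniq (T : finType) (e : rel T) b (v u1 u2 : T) :
  beta e b v = 1 -> b_partner e b v u1 -> b_partner e b v u2 -> u1 = u2.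
Proof.
rewrite /beta => /eqP/cards1P [z hz] h1 h2.
have : u1 \in [set u | b_partner e b v u] by rewrite inE.
have : u2 \in [set u | b_partner e b v u] by rewrite inE.
by rewrite hz !inE => /eqP -> /eqP ->.
Qed.

Lemma card_a (T : finType) (e : rel T) n k a (u v : T) :
  deza_graph e n k (k-1) a -> u != v -> ~~ b_partner e (k-1) u v ->
  #|cnbhd e u v| = a.
Proof.
case=> _ _ _ _ hd uv; rewrite /b_partner eq_sym uv /=.
by case: (hd u v uv) => -> //; rewrite eqxx.
Qed.

Theorem lemma7 (T : finType) (e : rel T) (n k a : nat) :
  deza_graph e n k (k - 1) a -> 1 < k ->
  (forall v, beta e (k - 1) v = 1) ->
  forall x xb x' : T,
    b_partner e (k - 1) x xb -> ~~ e x xb ->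
    e x x' -> ~~ e x' xb ->
    forall y yb : T, y \in cnbhd e x x' ->
      b_partner e (k - 1) y yb ->
      yb \in cnbhd e x x'.
Proof.
move=> hD k1 hb x xb x' pxb nxxb xx' nx'xb y yb hy pyb.
have [[esym eirr] _ _ hk _] := hD.
rewrite inC in hy; case/andP: hy => xy x'y.
have k0 : 0 < k by lia.
have cx := bp_card pxb.
have cy := bp_card pyb.
have cxbx := bp_card (bp_sym pxb).
have nxbx' : ~~ e xb x' by rewrite esym.
have yx' : y != x' by apply/eqP => E; rewrite -E eirr in x'y.
have yx : y != x by apply/eqP => E; rewrite -E eirr in xy.
have yxb : y != xb by apply/eqP => E; rewrite -E xy in nxxb.
have xbx' : xb != x' by apply/eqP => E; rewrite E xx' in nxxb.
have xbx : xb != x by case/andP: pxb.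
have exby : e xb y := Klem hk cx k0 xx' nxbx' xy yx'.
have eyxb : e y xb by rewrite esym.
have eyx : e y x by rewrite esym.
have eyx' : e y x' by rewrite esym.
have ybx : yb != x.
  apply/eqP => E; rewrite E in pyb.
  have := bp_uniq (hb x) pxb (bp_sym pyb) => E2.
  by rewrite E2 xy in nxxb.
have ybxb : yb != xb.
  apply/eqP => E; rewrite E in pyb.
  have := bp_uniq (hb xb) (bp_sym pxb) (bp_sym pyb) => E2.
  by rewrite E2 eqxx in yx.
have ybx' : yb != x'.
  apply/eqP => E; rewrite E in cy.
  have := Klem hk cy k0 eyx' (negbT (eirr x')) eyxb xbx'.
  by rewrite (negbTE nx'xb).
have cxy : #|cnbhd e x y| = a.
  apply: (@card_a _ e n k a x y hD); first by rewrite eq_sym.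
  apply/negP => p; have E := bp_uniq (hb x) pxb p.
  by rewrite -E eqxx in yxb.
have cxby : #|cnbhd e xb y| = a.
  apply: (@card_a _ e n k a xb y hD); first by rewrite eq_sym.
  apply/negP => p; have E := bp_uniq (hb xb) (bp_sym pxb) p.
  by rewrite -E eqxx in yx.
have cxyb : #|cnbhd e x yb| = a.
  apply: (@card_a _ e n k a x yb hD); first by rewrite eq_sym.
  apply/negP => p; have E := bp_uniq (hb x) pxb p.
  by rewrite -E eqxx in ybxb.
have cxbyb : #|cnbhd e xb yb| = a.
  apply: (@card_a _ e n k a xb yb hD); first by rewrite eq_sym.
  apply/negP => p; have E := bp_uniq (hb xb) (bp_sym pxb) p.
  by rewrite -E eqxx in ybx.
have [t] : exists2 t, t \in cnbhd e xb y & t \notin nbhd e x.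
  apply/subsetPn/negP => S.
  have S2 : cnbhd e xb y \subset cnbhd e x y :\ x'.
    apply/subsetP => z hz.
    have hzx := subsetP S z hz.
    rewrite inC in hz; case/andP: hz => hz1 hz2.
    have exz : e x z by rewrite -inN.
    rewrite in_setD1 inC; apply/and3P; split => //.
    by apply/eqP => E; move: nxbx'; rewrite -E hz1.
  have := subset_leq_card S2.
  have := cardsD1 x' (cnbhd e x y).
  by rewrite inC xx' eyx' cxy cxby /= => -> ; rewrite add1n ltnn.
rewrite inC inN => /andP [ext eyt] nxt.
have tx' : t != x' by apply/eqP => E; rewrite E xx' in nxt.
rewrite inC.
case Ex: (e x yb); case Ex': (e x' yb) => //=.
-
  have nybx' : ~~ e yb x' by rewrite esym Ex'.
  have eybxb : e yb xb := Klem hk cy k0 eyx' nybx' eyxb xbx'.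
  have eybt : e yb t := Klem hk cy k0 eyx' nybx' eyt tx'.
  have S : cnbhd e x yb \subset cnbhd e xb yb :\ t.
    apply/subsetP => z; rewrite inC => /andP [h1 h2].
    have zx' : z != x' by apply/eqP => E; move: nybx'; rewrite -E h2.
    have exbz := Klem hk cx k0 xx' nxbx' h1 zx'.
    rewrite in_setD1 inC; apply/and3P; split => //.
    by apply/eqP => E; move: nxt; rewrite -E h1.
  have := subset_leq_card S.
  have := cardsD1 t (cnbhd e xb yb).
  by rewrite inC ext eybt cxyb cxbyb /= => -> ; rewrite add1n ltnn.
-
  have nybx : ~~ e yb x by rewrite esym Ex.
  have nyyb : ~~ e y yb.
    apply/negP => eyyb.
    have := Klem hk cy k0 eyx nybx eyyb ybx.
    by rewrite eirr.
  have eybxb : e yb xb := Klem hk cy k0 eyx nybx eyxb xbx.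
  have exbyb : e xb yb by rewrite esym.
  have tyb : t = yb.
    apply/eqP/negPn/negP => tyb.
    have := Klem hk cxbx k0 exbyb (negbT Ex) ext tyb.
    by move/negbTE: nxt; move=> ->.
  by rewrite -tyb eyt in nyyb.
-
  have nybx : ~~ e yb x by rewrite esym Ex.
  have xx'n : x' != x by apply/eqP => E; rewrite E eirr in xx'.
  have := Klem hk cy k0 eyx nybx eyx' xx'n.
  by rewrite esym Ex'.
Qed.
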